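(* If $\phi(1:0)$ is not a singular point of $\mathcal C$, then the leading coefficients with respect to $s$ of $p_\phi(s,1;t,1)$ and $q_\phi(s,1;t,1)$ (i.e. the coefficients of $s^{\mu}$ and $s^{n-\mu}$ respectively, as elements of $\mathbb C[t]$) are coprime in $\mathbb C[t]$.
   Context: Let $a,b,c\in\mathbb C[s,v]$ be homogeneous of the same degree $n\ge3$, $\gcd(a,b,c)=1$, with $\phi=(a:b:c):\mathbb P^1\to\mathbb P^2$ birational onto its image $\mathcal C$. Let $p=(p_1,p_2,p_3)$, $q=(q_1,q_2,q_3)$ be a $\mu$-basis: a homogeneous basis, of degrees $\mu\le n-\mu$, of the free syzygy module of $(a,b,c)$. $p_\phi(s,v;t,u)=\sum_ip_i(s,v)\phi_i(t,u)$, $q_\phi(s,v;t,u)=\sum_iq_i(s,v)\phi_i(t,u)$ with $(\phi_1,\phi_2,\phi_3)=(a,b,c)$. *)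

(* Defs.v *)
From HB Require Import structures.
From mathcomp Require Import all_boot all_order all_algebra.
Set Implicit Arguments. Unset Strict Implicit. Unset Printing Implicit Defensive.
Import Order.TTheory GRing.Theory Num.Theory.
Local Open Scope ring_scope.

(* ---------- Binary forms in (s,v) ----------
   A homogeneous polynomial A(s,v) of degree d is encoded by its
   dehomogenisation A(s,1) : {poly F}; coefficient i is the coefficient of
   s^i v^(d-i).  This is a bijection between forms of degree d (including 0)
   and univariate polynomials of size <= d+1.  Products / sums of forms
   correspond to products / sums of dehomogenisations. *)
Definition homog (F : nzRingType) (d : nat) (A : {poly F}) : bool :=
  (size A <= d.+1)%N.

Definition homog_sub (F : nzRingType) (d e : nat) (A : {poly F}) : bool :=
  if (e <= d)%N then homog (d - e) A else A == 0.

Definition forms_coprime (F : nzRingType) (n : nat) (a b c : {poly F}) : Prop :=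
  forall (e : nat) (g ha hb hc : {poly F}),
    (e <= n)%N -> g != 0 -> homog e g ->
    homog (n - e) ha -> homog (n - e) hb -> homog (n - e) hc ->
    a = g * ha -> b = g * hb -> c = g * hc -> e = 0%N.

Definition syz (F : comNzRingType) (a b c h1 h2 h3 : {poly F}) : Prop :=
  h1 * a + h2 * b + h3 * c = 0.

(* (p, q) is a mu-basis of (a,b,c): homogeneous syzygies of degrees
   mu <= n - mu forming a basis of the (graded, free) syzygy module over
   F[s,v].  Since the module is graded and p, q are homogeneous, "basis"
   amounts to: every homogeneous syzygy of degree d is alpha p + beta q with
   alpha, beta forms of degrees d - mu, d - (n - mu), and such a combination
   vanishes only trivially. *)
Definition mu_basis (F : comNzRingType) (n : nat) (a b c : {poly F}) (mu : nat)
    (p1 p2 p3 q1 q2 q3 : {poly F}) : Prop :=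
  [/\ (mu <= n - mu)%N,
      [/\ homog mu p1, homog mu p2 & homog mu p3]
        /\ [/\ homog (n - mu) q1, homog (n - mu) q2 & homog (n - mu) q3],
      syz a b c p1 p2 p3 /\ syz a b c q1 q2 q3,
      (forall (d : nat) (h1 h2 h3 : {poly F}),
          homog d h1 -> homog d h2 -> homog d h3 -> syz a b c h1 h2 h3 ->
          exists alpha beta : {poly F},
            [/\ homog_sub d mu alpha, homog_sub d (n - mu) beta,
                h1 = alpha * p1 + beta * q1,
                h2 = alpha * p2 + beta * q2 &
                h3 = alpha * p3 + beta * q3]) &
      (forall (d : nat) (alpha beta : {poly F}),
          homog_sub d mu alpha -> homog_sub d (n - mu) beta ->
          alpha * p1 + beta * q1 = 0 -> alpha * p2 + beta * q2 = 0 ->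
          alpha * p3 + beta * q3 = 0 -> alpha = 0 /\ beta = 0)].

(* ---------- Ternary forms in (x,y,z) ----------
   f : {poly {poly {poly F}}}: outer variable z, middle y, inner x;
   the coefficient of x^i y^j z^k is f`_k`_j`_i. *)
Definition eval3 (R : comNzRingType) (f : {poly {poly {poly R}}}) (x y z : R) : R :=
  (map_poly (fun g : {poly {poly R}} =>
      (map_poly (fun h : {poly R} => h.[x]) g).[y]) f).[z].

Definition dx3 (R : comNzRingType) (f : {poly {poly {poly R}}}) :=
  map_poly (map_poly (@deriv R)) f.
Definition dy3 (R : comNzRingType) (f : {poly {poly {poly R}}}) :=
  map_poly (@deriv {poly R}) f.
Definition dz3 (R : comNzRingType) (f : {poly {poly {poly R}}}) := deriv f.

Definition homog3 (R : nzRingType) (m : nat) (f : {poly {poly {poly R}}}) : Prop :=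
  forall i j k : nat, f`_k`_j`_i != 0 -> (i + j + k)%N = m.

(* f(a(s,1), b(s,1), c(s,1)) in F[s] (dehomogenisation of f(a,b,c)). *)
Definition comp3 (F : comNzRingType) (f : {poly {poly {poly F}}}) (a b c : {poly F})
  : {poly F} :=
  eval3 (map_poly (map_poly (map_poly (@polyC F))) f) a b c.

Definition irreducible3 (F : idomainType) (f : {poly {poly {poly F}}}) : Prop :=
  [/\ f != 0, f \isn't a GRing.unit &
      forall g h, f = g * h -> g \is a GRing.unit \/ h \is a GRing.unit].

Definition implicit_eq (F : idomainType) (a b c : {poly F})
    (f : {poly {poly {poly F}}}) : Prop :=
  [/\ exists m, homog3 m f, irreducible3 f & comp3 f a b c = 0].

Definition singular_pt (F : idomainType) (f : {poly {poly {poly F}}}) (x0 y0 z0 : F)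
  : Prop :=
  [/\ eval3 f x0 y0 z0 = 0, eval3 (dx3 f) x0 y0 z0 = 0,
      eval3 (dy3 f) x0 y0 z0 = 0 & eval3 (dz3 f) x0 y0 z0 = 0].

(* phi = (a:b:c) is birational onto its image: it has a rational left inverse
   psi = (g : h) (ternary forms of the same degree), i.e. psi(phi(s:v)) = (s:v)
   as rational maps: v*g(a,b,c) = s*h(a,b,c) with h(a,b,c) <> 0.
   Dehomogenised at v = 1. *)
Definition birational_onto_image (F : idomainType) (a b c : {poly F}) : Prop :=
  exists (d : nat) (g h : {poly {poly {poly F}}}),
    [/\ homog3 d g, homog3 d h, comp3 h a b c != 0 &
        comp3 g a b c = 'X * comp3 h a b c].

(* p_phi(s,1;t,1) = sum_i p_i(s,1) phi_i(t,1), as a polynomial in s with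
   coefficients in F[t]. *)
Definition pphi (F : comNzRingType) (p1 p2 p3 a b c : {poly F}) : {poly {poly F}} :=
  map_poly (@polyC F) p1 * a%:P + map_poly (@polyC F) p2 * b%:P
  + map_poly (@polyC F) p3 * c%:P.

(* Main.v *)
Require Import Defs.
From HB Require Import structures.
From mathcomp Require Import all_boot all_order all_algebra.
From Stdlib Require Import Ring Lia.
Import GRing.Theory.
Local Open Scope ring_scope.
Definition radd (R : comNzRingType) (x y : R) : R := x + y.
Definition rmul (R : comNzRingType) (x y : R) : R := x * y.
Definition rsub (R : comNzRingType) (x y : R) : R := x - y.
Definition ropp (R : comNzRingType) (x : R) : R := - x.
Definition rzero (R : comNzRingType) : R := 0.
Definition rone (R : comNzRingType) : R := 1.
Lemma RTh (R : comNzRingType) : @ring_theory R (rzero R) (rone R) (@radd R) (@rmul R) (@rsub R) (@ropp R) (@eq R).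
Proof. rewrite /radd/rmul/rsub/ropp/rzero/rone. split; intros; rewrite ?addrA ?mulrA ?add0r ?mul1r ?subrr //; first (by rewrite addrC); first (by rewrite mulrC); by rewrite mulrDl. Qed.
Ltac rfold R := 
  rewrite -?[(_ + _ : R)]/(@radd R _ _) -?[(_ * _ : R)]/(@rmul R _ _) -?[(- _ : R)]/(@ropp R _) -?[(0 : R)]/(rzero R) -?[(1 : R)]/(rone R).
Ltac rprep R := rfold R; match goal with |- @eq _ ?x ?y => let T := type of (rzero R) in change (@eq T x y) end.
Definition PF (F : fieldType) : comNzRingType := {poly F}.
Ltac gnat := repeat match goal with |- context [?x *+ ?n] => let t := fresh "t" in set t := x *+ n; clearbody t end;
  repeat match goal with |- context [?x ^+ ?n] => let t := fresh "t" in set t := x ^+ n; clearbody t end.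
Ltac rg F := gnat; first [ rprep F; ring | rprep (PF F); ring ].
Ltac nlia := intros; repeat match goal with H : is_true (_ <= _)%N |- _ => move/leP: H => H end;
  try apply/leP;
  repeat match goal with H : (_ <= _)%coq_nat |- _ => revert H | H : @eq nat _ _ |- _ => revert H end;
  rewrite -?minusE -?plusE -?multE; intros; lia.
Set Implicit Arguments. Unset Strict Implicit.

Section Vsec.
Variable F : fieldType.
Add Ring Fr : (RTh F).
Add Ring Pr : (RTh (PF F)).
Variables (X Y Z : {poly F}) (A1 A2 A3 : F).

Inductive V : nat -> {poly F} -> F -> F -> F -> F -> Prop :=
| V0 k : V 0 k%:P k 0 0 0
| VS e u v w au u1 u2 u3 av v1 v2 v3 aw w1 w2 w3 :
   V e u au u1 u2 u3 -> V e v av v1 v2 v3 -> V e w aw w1 w2 w3 ->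
   V e.+1 (X*u + Y*v + Z*w) (A1*au + A2*av + A3*aw)
      (au + (A1*u1 + A2*v1 + A3*w1)) (av + (A1*u2 + A2*v2 + A3*w2))
      (aw + (A1*u3 + A2*v3 + A3*w3)).

Lemma Vcongr e u a b1 b2 b3 e' u' a' b1' b2' b3' :
  V e u a b1 b2 b3 -> e = e' -> u = u' -> a = a' -> b1 = b1' -> b2 = b2' -> b3 = b3' ->
  V e' u' a' b1' b2' b3'.
Proof. by move=> H <- <- <- <- <- <-. Qed.

Lemma Vzero e : V e 0 0 0 0 0.
Proof.
elim: e => [|e IH]; first by apply: (Vcongr (V0 0)) => //; rewrite polyC0.
apply: (Vcongr (VS IH IH IH)) => //; rewrite ?mulr0 ?addr0 //.
Qed.

Lemma Vadd e u0 a0 c1 c2 c3 u' a' b1' b2' b3' :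
  V e u0 a0 c1 c2 c3 -> V e u' a' b1' b2' b3' ->
  V e (u0 + u') (a0 + a') (c1 + b1') (c2 + b2') (c3 + b3').
Proof.
move=> H; elim: H u' a' b1' b2' b3' => [k|e0 x y z ax x1 x2 x3 ay y1 y2 y3 az z1 z2 z3 Hu IHu Hv IHv Hw IHw] u' a' b1' b2' b3' H'.
  inversion H'; subst. apply: (Vcongr (V0 (k + a'))) => //; rewrite ?addr0 ?polyCD //.
inversion H' as [|? ? ? ? ? ? ? ? ? ? ? ? ? ? ? ? Hu' Hv' Hw']; subst.
apply: (Vcongr (VS (IHu _ _ _ _ _ Hu') (IHv _ _ _ _ _ Hv') (IHw _ _ _ _ _ Hw'))) => //;
  rg F.
Qed.

Lemma Vscale c e u a b1 b2 b3 :
  V e u a b1 b2 b3 -> V e (c%:P * u) (c * a) (c * b1) (c * b2) (c * b3).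
Proof.
elim=> [k|e0 x y z ax x1 x2 x3 ay y1 y2 y3 az z1 z2 z3 Hu IHu Hv IHv Hw IHw].
  by apply: (Vcongr (V0 (c * k))); rewrite ?mulr0 ?polyCM.
by apply: (Vcongr (VS IHu IHv IHw)) => //; rg F.
Qed.

Lemma Vmul e u a b1 b2 b3 e' v a' b1' b2' b3' :
  V e u a b1 b2 b3 -> V e' v a' b1' b2' b3' ->
  V (e + e') (u * v) (a * a') (a * b1' + a' * b1) (a * b2' + a' * b2) (a * b3' + a' * b3).
Proof.
move=> H Hv0; elim: H => [k|e0 x y z ax x1 x2 x3 ay y1 y2 y3 az z1 z2 z3 Hu IHu Hv IHv Hw IHw].
  by apply: (Vcongr (Vscale k Hv0)); rewrite ?add0n ?mulr0 ?addr0.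
apply: (Vcongr (VS IHu IHv IHw)); rewrite ?addSn //; rg F.
Qed.

Lemma VX : V 1 X A1 1 0 0.
Proof.
apply: (Vcongr (VS (V0 1) (V0 0) (V0 0))); rewrite ?polyC0 ?polyC1 //; rg F.
Qed.
Lemma VY : V 1 Y A2 0 1 0.
Proof.
apply: (Vcongr (VS (V0 0) (V0 1) (V0 0))); rewrite ?polyC0 ?polyC1 //; rg F.
Qed.
Lemma VZ : V 1 Z A3 0 0 1.
Proof.
apply: (Vcongr (VS (V0 0) (V0 0) (V0 1))); rewrite ?polyC0 ?polyC1 //; rg F.
Qed.

Lemma Vpow e u a b1 b2 b3 k :
  V e u a b1 b2 b3 ->
  V (e * k) (u ^+ k) (a ^+ k) (k%:R * a ^+ k.-1 * b1) (k%:R * a ^+ k.-1 * b2)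
    (k%:R * a ^+ k.-1 * b3).
Proof.
move=> H; elim: k => [|k IH].
  by apply: (Vcongr (V0 1)); rewrite ?muln0 ?expr0 ?polyC1 ?mul0r.
apply: (Vcongr (Vmul H IH)); rewrite ?mulnS ?exprS //.
- case: k {IH} => [|k]; rewrite ?expr0 ?mul0r ?mulr0 ?add0r ?mulr1 ?mul1r //=.
  rewrite !mulrS exprS. rg F.
- case: k {IH} => [|k]; rewrite ?expr0 ?mul0r ?mulr0 ?add0r ?mulr1 ?mul1r //=.
  rewrite !mulrS exprS. rg F.
- case: k {IH} => [|k]; rewrite ?expr0 ?mul0r ?mulr0 ?add0r ?mulr1 ?mul1r //=.
  rewrite !mulrS exprS. rg F.
Qed.

Lemma Veuler e u a b1 b2 b3 : V e u a b1 b2 b3 -> A1 * b1 + A2 * b2 + A3 * b3 = e%:R * a.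
Proof.
elim=> [k|e0 x y z ax x1 x2 x3 ay y1 y2 y3 az z1 z2 z3 Hu IHu Hv IHv Hw IHw].
  by rewrite !mulr0 !addr0 mul0r.
rewrite mulrS. 
have E : A1 * (ax + (A1 * x1 + A2 * y1 + A3 * z1)) + A2 * (ay + (A1 * x2 + A2 * y2 + A3 * z2)) +
  A3 * (az + (A1 * x3 + A2 * y3 + A3 * z3)) = (A1 * ax + A2 * ay + A3 * az) +
  (A1 * (A1 * x1 + A2 * x2 + A3 * x3) + A2 * (A1 * y1 + A2 * y2 + A3 * y3) + A3 * (A1 * z1 + A2 * z2 + A3 * z3)) by rg F.
rewrite E IHu IHv IHw. rg F.
Qed.

Lemma coef_mul_top (p q : {poly F}) i j :
  (size p <= i.+1)%N -> (size q <= j.+1)%N ->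
  (size (p * q)%R <= (i + j).+1)%N /\ (p * q)`_(i + j) = p`_i * q`_j.
Proof.
move=> hp hq; split.
  apply: leq_trans (size_polyMleq p q) _.
  by rewrite -subn1 leq_subLR add1n -addnS -addSn leq_add.
rewrite coefM (bigD1 (Ordinal (leq_addr j i.+1))) //= addKn big1 ?addr0 // => k hk.
have hk' : nat_of_ord k != i by apply: contra hk => /eqP e; apply/eqP/val_inj.
case: (ltngtP k i) hk' => // hki _.
  rewrite [q`__]nth_default ?mulr0 //; apply: leq_trans hq _.
  move: (nat_of_ord k) hki => kk hki.
  by rewrite ltn_subRL ltn_add2r.
by rewrite [p`__]nth_default ?mul0r // (leq_trans hp).
Qed.

Lemma Vdec e u a b1 b2 b3 : V e.+1 u a b1 b2 b3 ->
  exists u1 u2 (c1 c2 c3 d1 d2 d3 : F),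
   [/\ V e u1 (A3 ^+ e * b1) c1 c2 c3, V e u2 (A3 ^+ e * b2) d1 d2 d3 &
   (A3 ^+ e.+1)%:P * u = a%:P * Z ^+ e.+1 + (A3%:P * X - A1%:P * Z) * u1
        + (A3%:P * Y - A2%:P * Z) * u2].
Proof.
elim: e u a b1 b2 b3 => [|e IH] u a b1 b2 b3 H;
  inversion H as [|? x y z ax x1 x2 x3 ay y1 y2 y3 az z1 z2 z3 Hu Hv Hw]; subst.
  inversion Hu; inversion Hv; inversion Hw; subst.
  exists ax%:P, ay%:P, 0, 0, 0, 0, 0, 0; split.
  - by apply: (Vcongr (V0 ax)) => //; rewrite expr0 mul1r !mulr0 !addr0.
  - by apply: (Vcongr (V0 ay)) => //; rewrite expr0 mul1r !mulr0 !addr0.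
  - rewrite !expr1 !(polyCD, polyCM). rg F.
have [u1x [u2x [? [? [? [? [? [? [H1x H2x Ex]]]]]]]]] := IH _ _ _ _ _ Hu.
have [u1y [u2y [? [? [? [? [? [? [H1y H2y Ey]]]]]]]]] := IH _ _ _ _ _ Hv.
have [u1z [u2z [? [? [? [? [? [? [H1z H2z Ez]]]]]]]]] := IH _ _ _ _ _ Hw.
have HZ := Vpow e.+1 VZ; rewrite mul1n in HZ.
have K1 := Vadd (Vscale ax HZ) (VS (Vscale A3 H1x) (Vscale A3 H1y) (Vscale A3 H1z)).
have K2 := Vadd (Vscale ay HZ) (VS (Vscale A3 H2x) (Vscale A3 H2y) (Vscale A3 H2z)).
eexists; eexists; do 6 eexists; split.
- apply: (Vcongr K1); rewrite ?mul1n //; rewrite !exprS; rg F.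
- apply: (Vcongr K2); rewrite ?mul1n //; rewrite !exprS; rg F.
have E : (A3 ^+ e.+2)%:P * (X * x + Y * y + Z * z) =
   (A3%:P * X) * ((A3 ^+ e.+1)%:P * x) + (A3%:P * Y) * ((A3 ^+ e.+1)%:P * y)
   + (A3%:P * Z) * ((A3 ^+ e.+1)%:P * z).
  rewrite [in LHS]exprS polyCM. rg F.
rewrite E Ex Ey Ez [Z ^+ e.+2]exprS !(polyCD, polyCM). rg F.
Qed.

Variable n : nat.
Hypotheses (hX : (size X <= n.+1)%N) (hY : (size Y <= n.+1)%N) (hZ : (size Z <= n.+1)%N).
Hypotheses (cX : X`_n = A1) (cY : Y`_n = A2) (cZ : Z`_n = A3).

Lemma Vtop e u a b1 b2 b3 : V e u a b1 b2 b3 ->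
  (size u <= (n * e).+1)%N /\ u`_(n * e) = a.
Proof.
elim=> [k|e0 x y z ax x1 x2 x3 ay y1 y2 y3 az z1 z2 z3 Hu [su cu] Hv [sv cv] Hw [sw cw]].
  by rewrite muln0 coefC size_polyC leq_b1.
have [s1 c1] := coef_mul_top hX su.
have [s2 c2] := coef_mul_top hY sv.
have [s3 c3] := coef_mul_top hZ sw.
rewrite mulnS; split.
  by rewrite !(leq_trans (size_polyD _ _)) // geq_max ?s3 // andbT !(leq_trans (size_polyD _ _)) // geq_max s1 s2.
by rewrite !coefD c1 c2 c3 cX cY cZ cu cv cw.
Qed.

Variables (t0 lam : F).
Hypotheses (tX : X.[t0] = lam * A1) (tY : Y.[t0] = lam * A2) (tZ : Z.[t0] = lam * A3).

Lemma Vt0 e u a b1 b2 b3 : V e u a b1 b2 b3 -> u.[t0] = lam ^+ e * a.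
Proof.
elim=> [k|e0 x y z ax x1 x2 x3 ay y1 y2 y3 az z1 z2 z3 Hu IHu Hv IHv Hw IHw].
  by rewrite hornerC expr0 mul1r.
rewrite !hornerE tX tY tZ IHu IHv IHw exprS. rg F.
Qed.

Lemma coef_neq0_size (p : {poly F}) k : p`_k != 0 -> (k < size p)%N.
Proof. by move=> h; rewrite ltnNge; apply: contra h => /leq_sizeP ->. Qed.

Lemma size_drop (p : {poly F}) k : (size p <= k.+1)%N -> p`_k = 0 -> (size p <= k)%N.
Proof.
move=> hs hk; apply/leq_sizeP => j; rewrite leq_eqVlt => /orP [/eqP <- //|hj].
by rewrite nth_default // (leq_trans hs).
Qed.

Lemma Vsize e u a b1 b2 b3 : V e u a b1 b2 b3 -> a != 0 -> size u = (n * e).+1.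
Proof.
move=> H ha; have [s c] := Vtop H; apply/eqP; rewrite eqn_leq s /=.
by apply: coef_neq0_size; rewrite c.
Qed.

Definition Vany e u := exists a b1 b2 b3, V e u a b1 b2 b3.
Definition Vnz e u := exists a b1 b2 b3, V e u a b1 b2 b3 /\ a != 0.

Hypothesis lam0 : lam != 0.

Lemma Vnz_size e u : Vnz e u -> size u = (n * e).+1.
Proof. by case=> [a [b1 [b2 [b3 [H ha]]]]]; exact: Vsize H ha. Qed.

Lemma Vnz_t0 e u : Vnz e u -> u.[t0] != 0.
Proof. by case=> [a [b1 [b2 [b3 [H ha]]]]]; rewrite (Vt0 H) mulf_neq0 // expf_neq0. Qed.

Lemma Vnz_neq0 e u : Vnz e u -> u != 0.
Proof. by move=> H; apply: contraNneq (Vnz_t0 H) => ->; rewrite horner0. Qed.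

Variables (La Lb Fa Fb : {poly F}) (m' : nat).
Hypotheses (hLa : exists b1 b2 b3, V 1 La 0 b1 b2 b3) (hFa : Vany m' Fa) (hFb : Vnz m' Fb).
Hypothesis hrel : La * Fa + Lb * Fb = 0.
Hypothesis A30 : A3 != 0.
Hypothesis hdec : forall e u b1 b2 b3, V e.+1 u 0 b1 b2 b3 ->
  exists u1 u2, Vany e u1 /\ Vany e u2 /\ (A3 ^+ e.+1)%:P * u = La * u1 + Lb * u2.

Lemma VAL e (u : {poly F}) : Vany e u -> u != 0 ->
  exists k eD D ew w, [/\ Vnz eD D, Vnz ew w, D * u = La ^+ k * w & (ew + k = eD + e)%N].
Proof.
move HN: (n * e - (size u).-1)%N => N; elim/ltn_ind: N e u HN => N IH e u HN [a [b1 [b2 [b3 Hu]]]] u0.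
case: (eqVneq a 0) => [a0|a0]; last first.
  exists 0%N, 0%N, 1, e, u; split => //.
  - by exists 1, 0, 0, 0; split; [exact: (Vcongr (V0 1)) | exact: oner_neq0].
  - by exists a, b1, b2, b3.
  - by rewrite addn0 add0n.
subst a.
case: e HN Hu => [|e] HN Hu; first by inversion Hu; subst; rewrite polyC0 eqxx in u0.
have [u1 [u2 [[? [? [? [? H1]]]] [[? [? [? [? H2]]]] Eu]]]] := hdec Hu.
case: hFa => [? [? [? [? HFa]]]]; case: hFb => [ab [? [? [? [HFb ab0]]]]].
case: hLa => [? [? [? HLa]]].
pose w := Fb * u1 - Fa * u2.
have Hw' := Vadd (Vmul HFb H1) (Vscale (-1) (Vmul HFa H2)).
have Hw : Vany (m' + e) w.
  do 4 eexists; apply: (Vcongr Hw') => //; rewrite /w polyCN polyC1; rg F.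
have Ew : ((A3 ^+ e.+1)%:P * Fb) * u = La * w.
  rewrite -mulrA [Fb * _]mulrC mulrA Eu /w.
  apply/eqP; rewrite -subr_eq0.
  have -> : (La * u1 + Lb * u2) * Fb - La * (Fb * u1 - Fa * u2) = u2 * (La * Fa + Lb * Fb) by rg F.
  by rewrite hrel mulr0.
have Fb0 : Fb != 0 by apply: (@Vnz_neq0 m').
have C0 : (A3 ^+ e.+1)%:P * Fb != 0 by rewrite mulf_neq0 ?polyC_eq0 ?expf_neq0.
have w0 : w != 0 by apply: contraNneq (mulf_neq0 C0 u0) => w0; rewrite Ew w0 mulr0.
have L0 : La != 0 by apply: contraNneq (mulf_neq0 C0 u0) => L0; rewrite Ew L0 mul0r.
have sz : size (((A3 ^+ e.+1)%:P * Fb) * u) = size (La * w) by rewrite Ew.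
rewrite !size_mul // in sz.
rewrite size_polyC expf_neq0 // add1n /= in sz.
have sFb := Vnz_size hFb.
have [su _] := Vtop Hu; have [sL cL] := Vtop HLa.
rewrite muln1 in sL cL.
have sL' : (size La <= n)%N by apply: size_drop.
have [? [? [? [? Hw2]]]] := Hw.
have [sw _] := Vtop Hw2.
have sL1 : (1 <= size La)%N by rewrite lt0n size_poly_eq0.
have su1 : (1 <= size u)%N by rewrite lt0n size_poly_eq0.
have sw1 : (1 <= size w)%N by rewrite lt0n size_poly_eq0.
rewrite sFb in sz.
have lt : (n * (m' + e) - (size w).-1 < N)%N.
  rewrite -HN mulnDr mulnS.
  rewrite mulnS in su.
  rewrite mulnDr in sw.
  move: sz su sw sL' sL1 su1 sw1; move: (n * m')%N (n * e)%N (size u) (size w) (size La) => P Q a b c.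
  move=> h1 h2 h3 h4 h5 h6 h7; clear -h1 h2 h3 h4 h5 h6 h7; nlia.
have [k [eD [D [ew [w' [HD Hw'' ED Ee]]]]]] := IH _ lt _ _ erefl Hw w0.
exists k.+1, (m' + eD)%N, ((A3 ^+ e.+1)%:P * Fb * D), ew, w'; split => //.
- have [aD [? [? [? [HD' aD0]]]]] := HD.
  do 4 eexists; split; first exact: Vmul (Vmul (V0 (A3 ^+ e.+1)) HFb) HD'.
  by rewrite !mulf_neq0 ?expf_neq0.
- by rewrite mulrAC Ew -mulrA [w * D]mulrC ED exprS mulrA.
- by move: Ee; nlia.
by rewrite polyC_eq0 expf_neq0.
Qed.

Lemma Vfinal d Eg Eh : Vany d Eg -> Vany d Eh -> Eg = 'X * Eh -> Eh != 0 -> False.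
Proof.
move=> Hg Hh EgE Eh0.
have Eg0 : Eg != 0 by rewrite EgE mulf_neq0 ?polyX_eq0.
have [kg [eDg [Dg [ewg [wg [HDg Hwg EDg Eeg]]]]]] := VAL Hg Eg0.
have [kh [eDh [Dh [ewh [wh [HDh Hwh EDh Eeh]]]]]] := VAL Hh Eh0.
have Dg0 := Vnz_neq0 HDg; have Dh0 := Vnz_neq0 HDh.
have wg0 := Vnz_neq0 Hwg; have wh0 := Vnz_neq0 Hwh.
have key : La ^+ kg * (wg * Dh) = La ^+ kh * ('X * Dg * wh).
  rewrite mulrA -EDg.
  have -> : La ^+ kh * ('X * Dg * wh) = 'X * Dg * (La ^+ kh * wh) by rg F.
  rewrite -EDh EgE; rg F.
have [b1 [b2 [b3 HLa]]] := hLa.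
have [sL cL] := Vtop HLa; rewrite muln1 in sL cL.
have sL' : (size La <= n)%N by apply: size_drop.
case: (leqP kh kg) => hk.
  have Ekg : kg = (kh + (kg - kh))%N by rewrite subnKC.
  move: key; rewrite Ekg exprD -mulrA => /mulfI key.
  have Lh : La ^+ kh != 0.
    by apply: contraNneq (mulf_neq0 Dh0 Eh0) => L0; rewrite EDh L0 mul0r.
  have {}key := key Lh.
  have R0 : 'X * Dg * wh != 0 by rewrite !mulf_neq0 ?polyX_eq0.
  have L0' : La ^+ (kg - kh) != 0 by apply: contraNneq R0 => L0; rewrite -key L0 mul0r.
  have sz : size (La ^+ (kg - kh) * (wg * Dh)) = size ('X * Dg * wh) by rewrite key.
  rewrite !size_mul ?mulf_neq0 ?polyX_eq0 // in sz.
  have sX : size ('X : {poly F}) = 2%N by rewrite size_polyX.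
  have se := size_exp La (kg - kh).
  have l1 : (1 <= size (La ^+ (kg - kh)))%N by rewrite lt0n size_poly_eq0.
  rewrite (Vnz_size HDg) (Vnz_size HDh) (Vnz_size Hwg) (Vnz_size Hwh) in sz.
  have bd : ((size La).-1 * (kg - kh) <= n * (kg - kh))%N.
    by rewrite leq_mul2r (leq_trans (leq_pred _) sL') orbT.
  have m1 : (n * ewg + n * kg = n * eDg + n * d)%N by rewrite -!mulnDr Eeg.
  have m2 : (n * ewh + n * kh = n * eDh + n * d)%N by rewrite -!mulnDr Eeh.
  have m3 : (n * kg = n * kh + n * (kg - kh))%N by rewrite -mulnDr -Ekg.
  move: sz se l1 bd m1 m2 m3 sX.
  move: (size ('X : {poly F})) (size (La ^+ (kg - kh))) ((size La).-1 * (kg - kh))%N (n * (kg - kh))%N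
    (n * ewg)%N (n * kg)%N (n * eDg)%N (n * d)%N (n * ewh)%N (n * kh)%N (n * eDh)%N.
  move=> ? ? ? ? ? ? ? ? ? ? ? h1 h2 h3 h4 h5 h6 h7 h8; clear -h1 h2 h3 h4 h5 h6 h7 h8. nlia.
have Ekh : kh = (kg + (kh - kg))%N by rewrite subnKC // ltnW.
move: key; rewrite Ekh exprD -mulrA => /mulfI key.
have Lg : La ^+ kg != 0.
  by apply: contraNneq (mulf_neq0 Dg0 Eg0) => L0; rewrite EDg L0 mul0r.
have {}key := key Lg.
have := congr1 (fun p => p.[t0]) key; rewrite /= !hornerE (Vt0 HLa) mulr0.
rewrite expr0n subn_eq0 leqNgt hk /= !mul0r => /eqP.
by rewrite mulf_eq0 (negbTE (Vnz_t0 Hwg)) (negbTE (Vnz_t0 HDh)).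
Qed.
End Vsec.

Section ABS.
Variable F : fieldType.
Add Ring Fr2 : (RTh F).
Add Ring Pr2 : (RTh (PF F)).
Lemma ABS (X Y Z : {poly F}) (A1 A2 A3 : F) n t0 lam
  (hX : (size X <= n.+1)%N) (hY : (size Y <= n.+1)%N) (hZ : (size Z <= n.+1)%N)
  (cX : X`_n = A1) (cY : Y`_n = A2) (cZ : Z`_n = A3)
  (tX : X.[t0] = lam * A1) (tY : Y.[t0] = lam * A2) (tZ : Z.[t0] = lam * A3)
  (lam0 : lam != 0) (A30 : A3 != 0) m al b1 b2 b3 d Eg Eh :
  V X Y Z A1 A2 A3 m 0 al b1 b2 b3 -> ~ (b1 = 0 /\ b2 = 0 /\ b3 = 0) ->
  Vany X Y Z A1 A2 A3 d Eg -> Vany X Y Z A1 A2 A3 d Eh -> Eg = 'X * Eh -> Eh != 0 -> False.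
Proof.
move=> Hf nb Hg Hh EgE Eh0.
have al0 : al = 0 by have [_ <-] := Vtop hX hY hZ cX cY cZ Hf; rewrite coef0.
subst al.
case: m Hf => [|m'] Hf; first by inversion Hf; subst; apply: nb.
have Eu := Veuler Hf; rewrite mulr0 in Eu.
have [u1 [u2 [? [? [? [? [? [? [H1 H2 E12]]]]]]]]] := Vdec Hf.
rewrite mulr0 polyC0 mul0r add0r in E12.
have HL1 : exists c1 c2 c3, V X Y Z A1 A2 A3 1 (A3%:P * X - A1%:P * Z) 0 c1 c2 c3.
  do 3 eexists; apply: (Vcongr (Vadd (Vscale A3 (VX X Y Z A1 A2 A3)) (Vscale (- A1) (VZ X Y Z A1 A2 A3)))) => //.
  - by rewrite polyCN mulNr.
  - rg F.
have HL2 : exists c1 c2 c3, V X Y Z A1 A2 A3 1 (A3%:P * Y - A2%:P * Z) 0 c1 c2 c3.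
  do 3 eexists; apply: (Vcongr (Vadd (Vscale A3 (VY X Y Z A1 A2 A3)) (Vscale (- A2) (VZ X Y Z A1 A2 A3)))) => //.
  - by rewrite polyCN mulNr.
  - rg F.
have dec : forall e u c1 c2 c3, V X Y Z A1 A2 A3 e.+1 u 0 c1 c2 c3 ->
  exists v1 v2, Vany X Y Z A1 A2 A3 e v1 /\ Vany X Y Z A1 A2 A3 e v2 /\
   (A3 ^+ e.+1)%:P * u = (A3%:P * X - A1%:P * Z) * v1 + (A3%:P * Y - A2%:P * Z) * v2.
  move=> e u c1 c2 c3 H.
  have [v1 [v2 [? [? [? [? [? [? [K1 K2 K]]]]]]]]] := Vdec H.
  exists v1, v2; split; first by do 4 eexists; exact: K1.
  split; first by do 4 eexists; exact: K2.
  by rewrite K polyC0 mul0r add0r.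
case: (eqVneq b2 0) => b20.
  case: (eqVneq b1 0) => b10.
    apply: nb; split => //; split => //.
    by move: Eu; rewrite b10 b20 !mulr0 !add0r => /eqP; rewrite mulf_eq0 (negbTE A30) => /eqP.
  apply: (Vfinal hX hY hZ cX cY cZ tX tY tZ lam0 (La := A3%:P * Y - A2%:P * Z) (Lb := A3%:P * X - A1%:P * Z) (Fa := u2) (Fb := u1) (m' := m')) Hg Hh EgE Eh0 => //.
  - by do 4 eexists; exact: H2.
  - by do 4 eexists; split; [exact: H1|rewrite mulf_neq0 ?expf_neq0].
  - by rewrite addrC.
  - move=> e u c1 c2 c3 H; have [v1 [v2 [K1 [K2 K]]]] := dec e u c1 c2 c3 H.
    by exists v2, v1; rewrite K addrC.
apply: (Vfinal hX hY hZ cX cY cZ tX tY tZ lam0 (La := A3%:P * X - A1%:P * Z) (Lb := A3%:P * Y - A2%:P * Z) (Fa := u1) (Fb := u2) (m' := m')) Hg Hh EgE Eh0 => //.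
- by do 4 eexists; exact: H1.
- by do 4 eexists; split; [exact: H2|rewrite mulf_neq0 ?expf_neq0].
Qed.
End ABS.

Lemma size_map_le (R R' : nzSemiRingType) (f : R -> R') (p : {poly R}) :
  f 0 = 0 -> (size (map_poly f p) <= size p)%N.
Proof. by move=> f0; apply/leq_sizeP => j hj; rewrite coef_map_id0 // nth_default. Qed.

Lemma horner_map_wide (R : nzSemiRingType) (R' : nzSemiRingType) (f : R -> R') (p : {poly R}) x N :
  f 0 = 0 -> (size p <= N)%N -> (map_poly f p).[x] = \sum_(i < N) f p`_i * x ^+ i.
Proof.
move=> f0 hs; rewrite (horner_coef_wide _ (leq_trans (size_map_le _ f0) hs)).
by apply: eq_bigr => i _; rewrite coef_map_id0.
Qed.

Lemma eval3_sum (R : comNzRingType) (K : {poly {poly {poly R}}}) x y z N :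
  (size K <= N)%N -> (forall l, (size (K`_l)%R <= N)%N) ->
  eval3 K x y z = \sum_(l < N) \sum_(j < N) (K`_l`_j).[x] * y ^+ j * z ^+ l.
Proof.
move=> h1 h2; rewrite /eval3 (horner_map_wide _ _ h1); last by rewrite map_poly0 horner0.
apply: eq_bigr => l _; rewrite (horner_map_wide _ _ (h2 l)); last by rewrite horner0.
by rewrite mulr_suml.
Qed.

Section Tern.
Variable F : fieldType.
Add Ring Fr : (RTh F).
Add Ring Pr : (RTh (PF F)).
Variables (k : {poly {poly {poly F}}}) (e : nat).
Hypothesis hk : homog3 e k.

Lemma hk_l l : (size (k`_l)%R <= e.+1)%N.
Proof.
apply/leq_sizeP => j hj; apply/polyP => i; rewrite coef0.
apply/eqP; apply: contraTT hj => nz; rewrite -ltnNge ltnS.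
by have := hk nz; nlia.
Qed.

Lemma hk_0 : (size k <= e.+1)%N.
Proof.
apply/leq_sizeP => l hl; apply/polyP => j; rewrite coef0; apply/polyP => i; rewrite !coef0.
apply/eqP; apply: contraTT hl => nz; rewrite -ltnNge ltnS.
by have := hk nz; nlia.
Qed.

Definition kap l j := k`_l`_j`_(e - l - j).

Lemma kmono l j : k`_l`_j = (kap l j)%:P * 'X^(e - l - j).
Proof.
apply/polyP => i; rewrite coefCM coefXn /kap.
case: (eqVneq i (e - l - j)%N) => [->|ne]; first by rewrite mulr1.
rewrite mulr0; apply/eqP; apply: contraTT ne => nz; rewrite negbK.
by have := hk nz => h; apply/eqP; nlia.
Qed.

Lemma kap0 l j : kap l j != 0 -> ((e - l - j) + j + l = e)%N.
Proof. exact: hk. Qed.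
End Tern.

Lemma Vbig (F : fieldType) X Y Z A1 A2 A3 e N (u : 'I_N -> {poly F}) (al c1 c2 c3 : 'I_N -> F) :
  (forall i, V X Y Z A1 A2 A3 e (u i) (al i) (c1 i) (c2 i) (c3 i)) ->
  V X Y Z A1 A2 A3 e (\sum_(i < N) u i) (\sum_(i < N) al i) (\sum_(i < N) c1 i)
    (\sum_(i < N) c2 i) (\sum_(i < N) c3 i).
Proof.
elim: N u al c1 c2 c3 => [|N IH] u al c1 c2 c3 H; first by rewrite !big_ord0; exact: Vzero.
rewrite !big_ord_recr /=; apply: Vadd; first by apply: IH => i; apply: H.
exact: H.
Qed.

Lemma size_deriv_le (R : nzSemiRingType) (p : {poly R}) : (size p^`() <= size p)%N.
Proof.
apply/leq_sizeP => j hj; rewrite coef_deriv nth_default ?mul0rn //.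
by apply: leq_trans hj _.
Qed.

Lemma size_Mn_le (R : nzSemiRingType) (p : {poly R}) m : (size (p *+ m) <= size p)%N.
Proof. by apply/leq_sizeP => j hj; rewrite coefMn nth_default ?mul0rn. Qed.

Section Tern2.
Variable F : fieldType.
Add Ring Fr3 : (RTh F).
Add Ring Pr3 : (RTh (PF F)).
Variables (k : {poly {poly {poly F}}}) (e : nat).
Hypothesis hk : homog3 e k.
Variables (a b c : {poly F}) (x y z : F).

Lemma Vterm l j :
  V a b c x y z e ((kap k e l j)%:P * a ^+ (e - l - j) * b ^+ j * c ^+ l)
    (kap k e l j * x ^+ (e - l - j) * y ^+ j * z ^+ l)
    (kap k e l j * ((e - l - j)%:R * x ^+ (e - l - j).-1) * y ^+ j * z ^+ l)
    (kap k e l j * x ^+ (e - l - j) * (j%:R * y ^+ j.-1) * z ^+ l)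
    (kap k e l j * x ^+ (e - l - j) * y ^+ j * (l%:R * z ^+ l.-1)).
Proof.
case: (eqVneq (kap k e l j) 0) => [->|nz].
  by apply: (Vcongr (Vzero _ _ _ _ _ _ e)); rewrite ?polyC0 ?mul0r.
have He := kap0 hk nz.
have H := Vscale (kap k e l j) (Vmul (Vmul (Vpow (e - l - j) (VX a b c x y z)) (Vpow j (VY a b c x y z))) (Vpow l (VZ a b c x y z))).
apply: (Vcongr H); rewrite ?mul1n //; rg F.
Qed.

Lemma E_comp : comp3 k a b c =
  \sum_(l < e.+1) \sum_(j < e.+1) (kap k e l j)%:P * a ^+ (e - l - j) * b ^+ j * c ^+ l.
Proof.
rewrite /comp3 (eval3_sum _ _ _ (N := e.+1)).
- apply: eq_bigr => l _; apply: eq_bigr => j _.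
  rewrite coef_map_id0 ?map_poly0 // coef_map_id0 ?map_poly0 // (kmono hk).
  by rewrite rmorphM /= map_polyC map_polyXn hornerCM hornerXn.
- by apply: leq_trans (size_map_le _ _) (hk_0 hk); rewrite map_poly0.
- move=> l; rewrite coef_map_id0 ?map_poly0 //.
  by apply: leq_trans (size_map_le _ _) (hk_l hk l); rewrite map_poly0.
Qed.

Lemma E_eval : eval3 k x y z =
  \sum_(l < e.+1) \sum_(j < e.+1) kap k e l j * x ^+ (e - l - j) * y ^+ j * z ^+ l.
Proof.
rewrite (eval3_sum _ _ _ (hk_0 hk) (hk_l hk)).
apply: eq_bigr => l _; apply: eq_bigr => j _.
by rewrite (kmono hk) hornerCM hornerXn.
Qed.

Lemma E_dx : eval3 (dx3 k) x y z =
  \sum_(l < e.+1) \sum_(j < e.+1)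
     kap k e l j * ((e - l - j)%:R * x ^+ (e - l - j).-1) * y ^+ j * z ^+ l.
Proof.
rewrite /dx3 (eval3_sum _ _ _ (N := e.+1)).
- apply: eq_bigr => l _; apply: eq_bigr => j _.
  rewrite coef_map_id0 ?map_poly0 // coef_map_id0 ?deriv0 // (kmono hk).
  by rewrite mul_polyC derivZ derivXn hornerZ hornerMn hornerXn mulr_natl.
- by apply: leq_trans (size_map_le _ _) (hk_0 hk); rewrite map_poly0.
- move=> l; rewrite coef_map_id0 ?map_poly0 //.
  by apply: leq_trans (size_map_le _ _) (hk_l hk l); rewrite deriv0.
Qed.

Lemma E_dy : eval3 (dy3 k) x y z =
  \sum_(l < e.+1) \sum_(j < e.+1)
     kap k e l j * x ^+ (e - l - j) * (j%:R * y ^+ j.-1) * z ^+ l.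
Proof.
rewrite /dy3 (eval3_sum _ _ _ (N := e.+1)).
- apply: eq_bigr => l _.
  rewrite [LHS]big_ord_recr [RHS]big_ord_recl /= mul0r mulr0 mul0r add0r.
  rewrite coef_map_id0 ?deriv0 // coef_deriv [k`_l`_e.+1]nth_default ?(hk_l hk) //.
  rewrite mul0rn horner0 !mul0r addr0.
  apply: eq_bigr => j _.
  rewrite coef_deriv hornerMn (kmono hk) hornerCM hornerXn /=.
  rewrite -mulr_natl /bump /= ?add1n ?add0n. rg F.
- by apply: leq_trans (size_map_le _ _) (hk_0 hk); rewrite deriv0.
- move=> l; rewrite coef_map_id0 ?deriv0 //.
  exact: leq_trans (size_deriv_le _) (hk_l hk l).
Qed.

Lemma E_dz : eval3 (dz3 k) x y z =
  \sum_(l < e.+1) \sum_(j < e.+1)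
     kap k e l j * x ^+ (e - l - j) * y ^+ j * (l%:R * z ^+ l.-1).
Proof.
rewrite /dz3 (eval3_sum _ _ _ (N := e.+1)).
- rewrite [LHS]big_ord_recr [RHS]big_ord_recl /=.
  rewrite [X in _ = X + _]big1 ?add0r; last by move=> j _; rewrite mul0r mulr0.
  rewrite coef_deriv [k`_e.+1]nth_default ?(hk_0 hk) // mul0rn.
  rewrite [X in _ + X = _]big1 ?addr0; last by move=> j _; rewrite coef0 horner0 !mul0r.
  apply: eq_bigr => l _; apply: eq_bigr => j _.
  rewrite coef_deriv coefMn hornerMn (kmono hk) hornerCM hornerXn /=.
  rewrite -mulr_natl /bump /= ?add1n ?add0n. rg F.
- exact: leq_trans (size_deriv_le _) (hk_0 hk).
- move=> l; rewrite coef_deriv.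
  exact: leq_trans (size_Mn_le _ _) (hk_l hk _).
Qed.

Lemma tern_V : V a b c x y z e (comp3 k a b c) (eval3 k x y z)
  (eval3 (dx3 k) x y z) (eval3 (dy3 k) x y z) (eval3 (dz3 k) x y z).
Proof.
rewrite E_comp E_eval E_dx E_dy E_dz.
apply: Vbig => l; apply: Vbig => j; exact: Vterm.
Qed.
End Tern2.

Section LinAlg.
Variable F : fieldType.
Add Ring Fr4 : (RTh F).
Add Ring Pr4 : (RTh (PF F)).
Lemma Vrot X Y Z A1 A2 A3 e (u : {poly F}) a b1 b2 b3 :
  V X Y Z A1 A2 A3 e u a b1 b2 b3 -> V Y Z X A2 A3 A1 e u a b2 b3 b1.
Proof.
elim=> [k|e0 x y z ax x1 x2 x3 ay y1 y2 y3 az z1 z2 z3 Hu IHu Hv IHv Hw IHw].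
  exact: V0.
apply: (Vcongr (VS IHv IHw IHu)) => //; rg F.
Qed.


Lemma par (v1 v2 v3 w1 w2 w3 : F) :
  v2 * w3 = v3 * w2 -> v3 * w1 = v1 * w3 -> v1 * w2 = v2 * w1 ->
  ~ (w1 = 0 /\ w2 = 0 /\ w3 = 0) ->
  exists mu, [/\ v1 = mu * w1, v2 = mu * w2 & v3 = mu * w3].
Proof.
move=> e1 e2 e3 nw.
case: (eqVneq w1 0) => [w10|w10].
  case: (eqVneq w2 0) => [w20|w20].
    case: (eqVneq w3 0) => [w30|w30]; first by case: nw.
    exists (v3 / w3); split; last by rewrite divfK.
    - by apply: (mulIf w30); rewrite mulrAC divfK // e2.
    - by apply: (mulIf w30); rewrite mulrAC divfK.
  exists (v2 / w2); split; last 2 first.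
  - by rewrite divfK.
  - by apply: (mulIf w20); rewrite mulrAC divfK // e1.
  - by apply: (mulIf w20); rewrite mulrAC divfK.
exists (v1 / w1); split.
- by rewrite divfK.
- by apply: (mulIf w10); rewrite mulrAC divfK // e3.
- by apply: (mulIf w10); rewrite mulrAC divfK.
Qed.

Lemma linalg (A1 A2 A3 B1 B2 B3 P1 P2 P3 Q1 Q2 Q3 : F) :
  ~ (A1 = 0 /\ A2 = 0 /\ A3 = 0) -> ~ (B1 = 0 /\ B2 = 0 /\ B3 = 0) ->
  P1 * A1 + P2 * A2 + P3 * A3 = 0 -> Q1 * A1 + Q2 * A2 + Q3 * A3 = 0 ->
  P1 * B1 + P2 * B2 + P3 * B3 = 0 -> Q1 * B1 + Q2 * B2 + Q3 * B3 = 0 ->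
  ~ (P1 = 0 /\ P2 = 0 /\ P3 = 0) ->
  (forall lam, ~ [/\ Q1 = lam * P1, Q2 = lam * P2 & Q3 = lam * P3]) ->
  exists lam, lam != 0 /\ [/\ B1 = lam * A1, B2 = lam * A2 & B3 = lam * A3].
Proof.
move=> nA nB pA qA pB qB nP nQ.
pose C1 := A2 * B3 - A3 * B2; pose C2 := A3 * B1 - A1 * B3; pose C3 := A1 * B2 - A2 * B1.
have [C0|nC] := boolP [&& C1 == 0, C2 == 0 & C3 == 0].
  case/and3P: C0 => /eqP c1 /eqP c2 /eqP c3.
  have [mu [b1 b2 b3]] : exists mu, [/\ B1 = mu * A1, B2 = mu * A2 & B3 = mu * A3].
    apply: par nA.
    - apply/eqP; rewrite eq_sym -subr_eq0; have := c1; rewrite /C1 => <-; apply/eqP; rg F.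
    - apply/eqP; rewrite eq_sym -subr_eq0; have := c2; rewrite /C2 => <-; apply/eqP; rg F.
    - apply/eqP; rewrite eq_sym -subr_eq0; have := c3; rewrite /C3 => <-; apply/eqP; rg F.
  exists mu; split => //; apply/eqP => mu0; apply: nB.
  by rewrite b1 b2 b3 mu0 !mul0r.
have nC' : ~ (C1 = 0 /\ C2 = 0 /\ C3 = 0).
  by case=> c1 [c2 c3]; move: nC; rewrite c1 c2 c3 !eqxx.
have crossv : forall v1 v2 v3 : F, v1 * A1 + v2 * A2 + v3 * A3 = 0 ->
    v1 * B1 + v2 * B2 + v3 * B3 = 0 ->
    exists mu, [/\ v1 = mu * C1, v2 = mu * C2 & v3 = mu * C3].
  move=> v1 v2 v3 hA hB; apply: par nC'.
  - apply/eqP; rewrite -subr_eq0; apply/eqP.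
    have -> : v2 * C3 - v3 * C2 = A1 * (v1 * B1 + v2 * B2 + v3 * B3) - B1 * (v1 * A1 + v2 * A2 + v3 * A3) by rewrite /C2 /C3; rg F.
    by rewrite hA hB !mulr0 subrr.
  - apply/eqP; rewrite -subr_eq0; apply/eqP.
    have -> : v3 * C1 - v1 * C3 = A2 * (v1 * B1 + v2 * B2 + v3 * B3) - B2 * (v1 * A1 + v2 * A2 + v3 * A3) by rewrite /C1 /C3; rg F.
    by rewrite hA hB !mulr0 subrr.
  - apply/eqP; rewrite -subr_eq0; apply/eqP.
    have -> : v1 * C2 - v2 * C1 = A3 * (v1 * B1 + v2 * B2 + v3 * B3) - B3 * (v1 * A1 + v2 * A2 + v3 * A3) by rewrite /C1 /C2; rg F.
    by rewrite hA hB !mulr0 subrr.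
have [mu1 [p1 p2 p3]] := crossv _ _ _ pA pB.
have [mu2 [q1 q2 q3]] := crossv _ _ _ qA qB.
case: (eqVneq mu1 0) => [m0|m0]; first by case: nP; rewrite p1 p2 p3 m0 !mul0r.
case: (nQ (mu2 / mu1)); split.
- by rewrite q1 p1 mulrA divfK.
- by rewrite q2 p2 mulrA divfK.
- by rewrite q3 p3 mulrA divfK.
Qed.
End LinAlg.

Section PartA.
Variable F : fieldType.
Add Ring Fr5 : (RTh F).
Add Ring Pr5 : (RTh (PF F)).

Lemma homog_sub_gt d e (A : {poly F}) : (d < e)%N -> homog_sub d e A -> A = 0.
Proof. by move=> h; rewrite /homog_sub leqNgt h /= => /eqP. Qed.

Lemma homog_sub1 d : homog_sub d d (1 : {poly F}).
Proof. by rewrite /homog_sub leqnn subnn /homog size_polyC oner_neq0. Qed.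

Lemma homog_sub0 d e : homog_sub d e (0 : {poly F}).
Proof. by rewrite /homog_sub; case: ifP => // _; rewrite /homog size_poly0. Qed.

Lemma size_sub_le (p q : {poly F}) m : (size p <= m)%N -> (size q <= m)%N -> (size (p - q)%R <= m)%N.
Proof.
move=> hp hq; apply: leq_trans (size_polyD _ _) _.
by rewrite geq_max hp size_polyN hq.
Qed.

Lemma size_add_le (p q : {poly F}) m : (size p <= m)%N -> (size q <= m)%N -> (size (p + q)%R <= m)%N.
Proof. by move=> hp hq; apply: leq_trans (size_polyD _ _) _; rewrite geq_max hp hq. Qed.

Lemma partA n (a b c : {poly F}) mu p1 p2 p3 q1 q2 q3 :
  (3 <= n)%N -> homog n a -> homog n b -> homog n c ->
  mu_basis n a b c mu p1 p2 p3 q1 q2 q3 ->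
  [/\ p1`_mu * a`_n + p2`_mu * b`_n + p3`_mu * c`_n = 0,
      q1`_(n - mu) * a`_n + q2`_(n - mu) * b`_n + q3`_(n - mu) * c`_n = 0,
      ~ (p1`_mu = 0 /\ p2`_mu = 0 /\ p3`_mu = 0) &
      forall lam, ~ [/\ q1`_(n - mu) = lam * p1`_mu, q2`_(n - mu) = lam * p2`_mu
                     & q3`_(n - mu) = lam * p3`_mu]].
Proof.
move=> n3 ha hb hc [hmu [[hp1 hp2 hp3] [hq1 hq2 hq3]] [sp sq] hgen hind].
have top : forall (r1 r2 r3 : {poly F}) d, (size r1 <= d.+1)%N -> (size r2 <= d.+1)%N ->
    (size r3 <= d.+1)%N -> r1 * a + r2 * b + r3 * c = 0 ->
    r1`_d * a`_n + r2`_d * b`_n + r3`_d * c`_n = 0.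
  move=> r1 r2 r3 d s1 s2 s3 E.
  have : (r1 * a + r2 * b + r3 * c)`_(d + n) = 0 by rewrite E coef0.
  rewrite !coefD.
  by rewrite (coef_mul_top s1 ha).2 (coef_mul_top s2 hb).2 (coef_mul_top s3 hc).2.
have one0 : forall d, homog_sub d d (1 : {poly F}) -> (1 : {poly F}) = 0 -> False.
  by move=> d _ /eqP; rewrite oner_eq0.
split.
- exact: top hp1 hp2 hp3 sp.
- exact: top hq1 hq2 hq3 sq.
- case=> P1 [P2 P3].
  have pz : p1 = 0 /\ p2 = 0 /\ p3 = 0.
    case Emu: mu P1 P2 P3 hp1 hp2 hp3 => [|m] P1 P2 P3 hp1 hp2 hp3.
      have z : forall p : {poly F}, (size p <= 1)%N -> p`_0 = 0 -> p = 0.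
        by move=> p s e0; apply/eqP; rewrite -size_poly_eq0 -leqn0; apply: size_drop.
      by rewrite (z _ hp1 P1) (z _ hp2 P2) (z _ hp3 P3).
    have [al [be [ha' hb' e1 e2 e3]]] := hgen m p1 p2 p3 (size_drop hp1 P1) (size_drop hp2 P2) (size_drop hp3 P3) sp.
    rewrite (homog_sub_gt _ ha') ?(homog_sub_gt _ hb') in e1 e2 e3; try by move: hmu Emu; nlia.
    by rewrite e1 e2 e3 !mul0r !addr0.
  case: pz => z1 [z2 z3].
  have [] := hind mu 1 0 (homog_sub1 mu) (homog_sub0 _ _).
  + by rewrite z1 mulr0 mul0r addr0.
  + by rewrite z2 mulr0 mul0r addr0.
  + by rewrite z3 mulr0 mul0r addr0.
  by move=> e1 _; move/eqP: e1; rewrite oner_eq0.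
move=> lam [Q1 Q2 Q3].
pose k := (n - mu - mu)%N.
pose L : {poly F} := lam%:P * 'X^k.
have sL : (size L <= k.+1)%N.
  by apply: leq_trans (size_polyMleq _ _) _; rewrite size_polyXn size_polyC; case: (lam != 0).
have ek : (k + mu = n - mu)%N by rewrite /k; move: hmu; nlia.
have r_ok : forall (p q : {poly F}), (size p <= mu.+1)%N -> (size q <= (n - mu).+1)%N ->
    q`_(n - mu) = lam * p`_mu -> (size (q - L * p)%R <= (n - mu - 1).+1)%N.
  move=> p q sp' sq' eq.
  have [s1 c1] := coef_mul_top sL sp'.
  have n1 : (n - mu - 1).+1 = (n - mu)%N by move: hmu n3; nlia.
  rewrite n1; apply: size_drop.
    by apply: size_sub_le => //; rewrite -ek.
  rewrite coefB -ek c1 ek eq /L coefCM coefXn eqxx mulr1 subrr //.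
have sr := fun (p q : {poly F}) => p.
have syzr : (q1 - L * p1) * a + (q2 - L * p2) * b + (q3 - L * p3) * c = 0.
  have -> : (q1 - L * p1) * a + (q2 - L * p2) * b + (q3 - L * p3) * c =
    (q1 * a + q2 * b + q3 * c) - L * (p1 * a + p2 * b + p3 * c) by rg F.
  by rewrite sp sq mulr0 subrr.
have [al [be [ha' hb' e1 e2 e3]]] := hgen _ _ _ _ (r_ok _ _ hp1 hq1 Q1) (r_ok _ _ hp2 hq2 Q2) (r_ok _ _ hp3 hq3 Q3) syzr.
rewrite (homog_sub_gt _ hb') ?mul0r ?addr0 in e1 e2 e3; last by move: hmu n3; nlia.
have [] := hind (n - mu)%N (- (L + al)) 1 _ (homog_sub1 _).
- rewrite /homog_sub hmu /homog size_polyN.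
  apply: size_add_le; first by rewrite -/k.
  move: ha'; rewrite /homog_sub; case: ifP => hle.
    by rewrite /homog => h; apply: leq_trans h _; move: hle; nlia.
  by move/eqP => ->; rewrite size_poly0.
- move/eqP: e1; rewrite subr_eq => /eqP ->; rg F.
- move/eqP: e2; rewrite subr_eq => /eqP ->; rg F.
- move/eqP: e3; rewrite subr_eq => /eqP ->; rg F.
by move=> _ /eqP; rewrite oner_eq0.
Qed.
End PartA.
Unset Implicit Arguments. Set Strict Implicit.

Lemma coef_pphi (F : fieldType) (p1 p2 p3 a b c : {poly F}) i :
  (pphi p1 p2 p3 a b c)`_i = (p1`_i)%:P * a + (p2`_i)%:P * b + (p3`_i)%:P * c.
Proof. by rewrite /pphi !coefD !coefMC !coef_map_id0. Qed.

Theorem lemma5p2 (F : closedFieldType) (Fchar0 : [pchar F] =i pred0)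
    (n : nat) (a b c : {poly F}) (mu : nat) (p1 p2 p3 q1 q2 q3 : {poly F}) :
  (3 <= n)%N ->
  homog n a -> homog n b -> homog n c ->
  forms_coprime n a b c ->
  birational_onto_image a b c ->
  mu_basis n a b c mu p1 p2 p3 q1 q2 q3 ->
  (* phi(1:0) = (a`_n : b`_n : c`_n) is not a singular point of C *)
  (exists f, implicit_eq a b c f /\ ~ singular_pt f a`_n b`_n c`_n) ->
  coprimep (pphi p1 p2 p3 a b c)`_mu (pphi q1 q2 q3 a b c)`_(n - mu).
Proof.
move=> n3 ha hb hc hcop [d [g [h [hg hh nh Egh]]]] hmb [f [[[m hf] _ Ef] nsing]].
have [pA qA nP nQ] := partA n3 ha hb hc hmb.
have n0 : (0 < n)%N by apply: leq_trans n3.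
case: (boolP (coprimep _ _)) => // nc; exfalso.
have [t0 rt] : exists t0, root (gcdp (pphi p1 p2 p3 a b c)`_mu (pphi q1 q2 q3 a b c)`_(n - mu)) t0.
  by apply/closed_rootP; rewrite -coprimep_def.
move: rt; rewrite root_gcd !coef_pphi => /andP [/eqP rU /eqP rW].
rewrite !hornerE in rU rW.
have nA : ~ (a`_n = 0 /\ b`_n = 0 /\ c`_n = 0).
  case=> z1 [z2 z3].
  have s : forall p : {poly F}, homog n p -> p`_n = 0 -> homog (n - 1) p.
    by move=> p hp zp; rewrite /homog subn1 prednK //; apply: size_drop.
  suff : (1 = 0)%N by [].
  apply: (hcop 1%N 1 a b c) => //; rewrite ?mul1r ?oner_neq0 ?s //.
  by rewrite /homog size_polyC oner_neq0.
have nB : ~ (a.[t0] = 0 /\ b.[t0] = 0 /\ c.[t0] = 0).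
  case=> z1 [z2 z3].
  pose G := 'X - t0%:P.
  have G0 : G != 0 by rewrite polyXsubC_eq0.
  have dv : forall p : {poly F}, p.[t0] = 0 -> p = G * (p %/ G).
    by move=> p zp; rewrite mulrC divpK // dvdp_XsubCl; apply/eqP.
  have s : forall p : {poly F}, homog n p -> homog (n - 1) (p %/ G).
    move=> p hp; rewrite /homog size_divp // size_XsubC subn1 prednK //.
    by rewrite leq_subLR; apply: leq_trans hp _; rewrite add1n.
  suff : (1 = 0)%N by [].
  apply: (hcop 1%N G _ _ _ _ G0 _ (s _ ha) (s _ hb) (s _ hc) (dv _ z1) (dv _ z2) (dv _ z3)) => //.
  by rewrite /homog size_XsubC.
have [lam [lam0 [tX tY tZ]]] := linalg nA nB pA qA rU rW nP nQ.
have Vf := tern_V hf a b c (a`_n) (b`_n) (c`_n).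
rewrite Ef in Vf.
have [_ ev0] := Vtop ha hb hc erefl erefl erefl Vf.
rewrite coef0 in ev0.
have nb : ~ [/\ eval3 (dx3 f) a`_n b`_n c`_n = 0, eval3 (dy3 f) a`_n b`_n c`_n = 0
          & eval3 (dz3 f) a`_n b`_n c`_n = 0].
  by case=> e1 e2 e3; apply: nsing; split.
have Vg := tern_V hg a b c (a`_n) (b`_n) (c`_n).
have Vh := tern_V hh a b c (a`_n) (b`_n) (c`_n).
case: (eqVneq c`_n 0) => [c0|c0].
  case: (eqVneq a`_n 0) => [a0|a0].
    case: (eqVneq b`_n 0) => [b0|b0]; first by apply: nA.
    apply: (ABS (X := c) (Y := a) (Z := b) (n := n) hc ha hb erefl erefl erefl tZ tX tY lam0 b0
       (Vrot (Vrot Vf)) _ (ex_intro _ _ (ex_intro _ _ (ex_intro _ _ (ex_intro _ _ (Vrot (Vrot Vg))))))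
       (ex_intro _ _ (ex_intro _ _ (ex_intro _ _ (ex_intro _ _ (Vrot (Vrot Vh)))))) Egh nh).
    by case=> e3 [e1 e2]; apply: nb.
  apply: (ABS (X := b) (Y := c) (Z := a) (n := n) hb hc ha erefl erefl erefl tY tZ tX lam0 a0
       (Vrot Vf) _ (ex_intro _ _ (ex_intro _ _ (ex_intro _ _ (ex_intro _ _ (Vrot Vg)))))
       (ex_intro _ _ (ex_intro _ _ (ex_intro _ _ (ex_intro _ _ (Vrot Vh))))) Egh nh).
  by case=> e2 [e3 e1]; apply: nb.
apply: (ABS (X := a) (Y := b) (Z := c) (n := n) ha hb hc erefl erefl erefl tX tY tZ lam0 c0
       Vf _ (ex_intro _ _ (ex_intro _ _ (ex_intro _ _ (ex_intro _ _ Vg))))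
       (ex_intro _ _ (ex_intro _ _ (ex_intro _ _ (ex_intro _ _ Vh)))) Egh nh).
by case=> e1 [e2 e3]; apply: nb.
Qed.
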